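(* Let $\mathbb{A}\colon\mathbb{R}^d\to\mathbb{R}^d$ be Lipschitz continuous and monotone, $T>0$, $X_0\in\mathbb{R}^d$, and let $(X,Z)\in\mathcal{C}^1([0,T),\mathbb{R}^{2d})$ be the solution of \[ \dot X(t)=-Z(t)-\mathbb{A}(X(t)),\qquad \dot Z(t)=-\frac{1}{T-t}Z(t)-\frac{1}{T-t}\mathbb{A}(X(t)),\qquad X(0)=X_0,\ Z(0)=0. \] Then $X$ extends continuously to $[0,T]$ (i.e., $X(T):=\lim_{t\to T^-}X(t)$ exists), and \[ \lim_{t\to T^-}\dot X(t)=\lim_{t\to T^-}\frac{X(t)-X(T)}{t-T}=0. \]
   Context: Monotone: $\langle\mathbb{A}x-\mathbb{A}y,x-y\rangle\ge0$ for all $x,y$. *)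

(* Defs.v *)
From HB Require Import structures.
From mathcomp Require Import all_boot all_order all_algebra.
From mathcomp Require Import all_classical all_reals all_analysis.
Set Implicit Arguments. Unset Strict Implicit. Unset Printing Implicit Defensive.
Import Order.TTheory GRing.Theory Num.Theory.
Import numFieldNormedType.Exports.
Local Open Scope ring_scope.

Definition dotv {R : realType} {d : nat} (u v : 'rV[R]_d) : R := (u *m v^T) 0 0.
Definition enorm {R : realType} {d : nat} (u : 'rV[R]_d) : R := Num.sqrt (dotv u u).

Definition lipschitzE {R : realType} {d : nat} (A : 'rV[R]_d -> 'rV[R]_d) : Prop :=
  exists L : R, forall x y, enorm (A x - A y) <= L * enorm (x - y).

Definition monotone_op {R : realType} {d : nat} (A : 'rV[R]_d -> 'rV[R]_d) : Prop :=
  forall x y, 0 <= dotv (A x - A y) (x - y).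

(* Main.v *)
Require Import Defs.
From HB Require Import structures.
From mathcomp Require Import all_boot all_order all_algebra.
From mathcomp Require Import all_classical all_reals all_analysis.
From mathcomp Require Import ring lra.
Import Order.TTheory GRing.Theory Num.Theory.
Import numFieldNormedType.Exports.
Local Open Scope classical_set_scope.
Local Open Scope ring_scope.



Section dot.
Context {R : realType} {d : nat}.
Implicit Types u v w : 'rV[R]_d.

Lemma dotvE u v : dotv u v = \sum_j u 0 j * v 0 j.
Proof. by rewrite /dotv !mxE; apply: eq_bigr => j _; rewrite mxE. Qed.

Lemma dotvC u v : dotv u v = dotv v u.
Proof. by rewrite !dotvE; apply: eq_bigr => j _; rewrite mulrC. Qed.

Lemma dotvDl u v w : dotv (u + v) w = dotv u w + dotv v w.
Proof. by rewrite !dotvE -big_split; apply: eq_bigr => j _; rewrite !mxE mulrDl. Qed.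

Lemma dotvZl a u v : dotv (a *: u) v = a * dotv u v.
Proof. by rewrite !dotvE mulr_sumr; apply: eq_bigr => j _; rewrite !mxE mulrA. Qed.

Lemma dotvNl u v : dotv (- u) v = - dotv u v.
Proof. by rewrite -scaleN1r dotvZl mulN1r. Qed.

Lemma dotvBl u v w : dotv (u - v) w = dotv u w - dotv v w.
Proof. by rewrite dotvDl dotvNl. Qed.

Lemma dotvDr u v w : dotv w (u + v) = dotv w u + dotv w v.
Proof. by rewrite dotvC dotvDl !(dotvC w). Qed.
Lemma dotvZr a u v : dotv v (a *: u) = a * dotv v u.
Proof. by rewrite dotvC dotvZl dotvC. Qed.
Lemma dotvNr u v : dotv v (- u) = - dotv v u.
Proof. by rewrite dotvC dotvNl dotvC. Qed.
Lemma dotvBr u v w : dotv w (u - v) = dotv w u - dotv w v.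
Proof. by rewrite dotvDr dotvNr. Qed.

Lemma dotv_ge0 u : 0 <= dotv u u.
Proof. by rewrite dotvE; apply: sumr_ge0 => j _; rewrite -expr2 sqr_ge0. Qed.

Lemma dotv_coord u j : u 0 j ^+ 2 <= dotv u u.
Proof.
rewrite dotvE (bigD1 j) //= expr2 lerDl; apply: sumr_ge0 => i _.
by rewrite -expr2 sqr_ge0.
Qed.

Lemma normv_le u e : 0 <= e -> dotv u u <= e ^+ 2 -> `|u| <= e.
Proof.
move=> e0 h; rewrite [leLHS]/Num.Def.normr/= mx_normrE.
apply: bigmax_le => // -[i j] _ /=; rewrite (ord1 i).
by rewrite -(ler_pXn2r (_ : 0 < 2)%N) ?nnegrE ?normr_ge0 // real_normK ?num_real // (le_trans (dotv_coord u j)).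
Qed.

Lemma coord_le_norm u j : `|u 0 j| <= `|u|.
Proof.
rewrite [leRHS]/Num.Def.normr/= mx_normrE.
by apply: le_trans; last exact: (le_bigmax _ _ (0, j)).
Qed.

Lemma dotv_le_norm u : dotv u u <= d%:R * `|u| ^+ 2.
Proof.
rewrite dotvE -[d in d%:R]card_ord -sum1_card natr_sum mulr_suml.
apply: ler_sum => j _; rewrite mul1r -expr2 -real_normK ?num_real //.
by rewrite ler_pXn2r ?nnegrE ?normr_ge0 // coord_le_norm.
Qed.

Lemma amgm u v l : 0 < l -> 2 * dotv u v <= l * dotv u u + l^-1 * dotv v v.
Proof.
move=> l0; have := dotv_ge0 (l *: u - v).
rewrite !(dotvBl, dotvBr, dotvZl, dotvZr) (dotvC v u) => h.
have : 0 <= l^-1 * (l * (l * dotv u u) - l * dotv u v - (l * dotv u v - dotv v v)).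
  by rewrite mulr_ge0 // invr_ge0 ltW.
rewrite !mulrBr !mulrA mulVf ?gt_eqF // !mul1r; lra.
Qed.

Lemma dotv_add_le u v : dotv (u + v) (u + v) <= 2 * dotv u u + 2 * dotv v v.
Proof.
rewrite !(dotvDl, dotvDr) (dotvC v u).
have := @amgm u v 1 ltr01; rewrite invr1 !mul1r; lra.
Qed.
Lemma amgm' u v l : 0 < l -> 2 * l * dotv u v <= l ^+ 2 * dotv u u + dotv v v.
Proof.
move=> l0; have H := @amgm u v l l0.
have := ler_wpM2l (ltW l0) H.
have -> : l * (2 * dotv u v) = 2 * l * dotv u v by ring.
have -> : l * (l * dotv u u + l^-1 * dotv v v) = l ^+ 2 * dotv u u + dotv v v.
  by rewrite mulrDr mulrA mulrA mulfV ?gt_eqF // mul1r expr2.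
done.
Qed.

Lemma mxnorm_le u e : 0 <= e -> (forall j, `|u 0 j| <= e) -> `|u| <= e.
Proof.
move=> e0 h; rewrite [leLHS]/Num.Def.normr/= mx_normrE.
by apply: bigmax_le => // -[i j] _ /=; rewrite (ord1 i).
Qed.

Lemma dotvZZ a u : dotv (a *: u) (a *: u) = a ^+ 2 * dotv u u.
Proof. by rewrite dotvZl dotvZr mulrA expr2. Qed.
End dot.



Lemma deriv_eps {R : realType} {d : nat} (f : R -> 'rV[R]_d) (s : R) (v : 'rV[R]_d) :
  is_derive s (1:R) f v -> forall e, 0 < e ->
  \forall t \near s, `|f t - f s - (t - s) *: v| <= e * `|t - s|.
Proof.
move=> [df dv] e e0.
have H : (fun h => h^-1 *: ((f \o shift s) (h *: 1) - f s)) @ 0^' --> v.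
  by rewrite -dv; exact: df.
move/cvgrPdist_le : H => /(_ e e0) H.
apply/nbhs0P.
have H' : \forall h \near (0:R), h != 0 -> `|v - h^-1 *: ((f \o shift s) (h *: 1) - f s)| <= e := H.
apply: filterS H' => h Hh.
have [->|h0] := eqVneq h 0.
  rewrite addr0 !subrr scale0r subr0 normr0; apply: mulr_ge0; [exact: ltW | exact: normr_ge0].
move: (Hh h0).
rewrite /= /shift /= (addrC s h) addrK.
have -> : h *: (1:R) = h by rewrite /GRing.scale/= mulr1.
rewrite addrC => Hh'.
have -> : f (s + h) - f s - h *: v = h *: (h^-1 *: (f (s + h) - f s) - v).
  by rewrite scalerBr scalerA divff // scale1r.
by rewrite normrZ mulrC ler_wpM2r // distrC.
Qed.



Lemma pureL1 {R : realType} (a h g P K D e eta Tt q1 qA q2 qD N1 N2 NA NX : R) :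
  0 < e -> 0 < a -> 0 < h -> 0 < g -> 0 <= P -> 0 <= K -> a / 2 <= Tt ->
  - (2 * (g * h) * q1) <= (g * h) ^+ 2 * P + N1 -> N1 <= D * (eta * h) ^+ 2 ->
  2 * g * q2 <= g ^+ 2 * NA + N2 -> N2 <= D * (eta * h) ^+ 2 ->
  NA <= K * NX -> NX <= 2 * N2 + 2 * (h * a) ^+ 2 * P ->
  0 <= q2 + h * a * qA -> Tt * qD = q1 + qA ->
  a * g^+2 * P + a * D * eta^+2 + 2 * K * g^+2 * D * eta^+2 + 2 * K * g^+2 * a^+2 * P + D * eta^+2
     <= g * e * a^+2 / 2 ->
  - (2 * qD) <= e * h.
Proof.
move=> e0 a0 h0 g0 P0 K0 aT H1 N1b H2 N2b NAb NXb Hm HD Hc.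
have s1 : NA <= K * (2 * (D * (eta * h) ^+ 2) + 2 * (h * a) ^+ 2 * P).
  apply: (le_trans NAb); apply: ler_wpM2l => //; lra.
have s2 : - (2 * g * h * a * qA) <= 2 * g * q2.
  have : 0 <= 2 * g * (q2 + h * a * qA) by apply: mulr_ge0 => //; lra.
  lra.
have s3 : - (2 * g * h * a * (q1 + qA)) <= h ^+ 2 * (g * e * a ^+ 2 / 2).
  have t1 : - (2 * (g * h) * q1) * a <= ((g * h) ^+ 2 * P + D * (eta * h) ^+ 2) * a.
    by apply: ler_wpM2r; lra.
  have t2 : g ^+ 2 * NA <= g ^+ 2 * (K * (2 * (D * (eta * h) ^+ 2) + 2 * (h * a) ^+ 2 * P)).
    by apply: ler_wpM2l => //; rewrite sqr_ge0.
  have t3 : h ^+ 2 * (a * g^+2 * P + a * D * eta^+2 + 2 * K * g^+2 * D * eta^+2 + 2 * K * g^+2 * a^+2 * P + D * eta^+2) <= h ^+ 2 * (g * e * a^+2 / 2).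
    by apply: ler_wpM2l => //; rewrite sqr_ge0.
  have E1 : - (2 * g * h * a * (q1 + qA)) = - (2 * (g * h) * q1) * a - 2 * g * h * a * qA by ring.
  have E2 : h ^+ 2 * (a * g^+2 * P + a * D * eta^+2 + 2 * K * g^+2 * D * eta^+2 + 2 * K * g^+2 * a^+2 * P + D * eta^+2)
     = ((g * h) ^+ 2 * P + D * (eta * h) ^+ 2) * a + g ^+ 2 * (K * (2 * (D * (eta * h) ^+ 2) + 2 * (h * a) ^+ 2 * P)) + D * (eta * h) ^+ 2 by ring.
  lra.
have s4 : - (2 * (q1 + qA)) <= e * h * a / 2.
  have gha : 0 < 2 * g * h * a by rewrite !mulr_gt0.
  rewrite -(ler_pM2l gha).
  have -> : 2 * g * h * a * - (2 * (q1 + qA)) = 2 * (- (2 * g * h * a * (q1 + qA))) by ring.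
  have -> : 2 * g * h * a * (e * h * a / 2) = 2 * (h ^+ 2 * (g * e * a ^+ 2 / 2)) by rewrite !expr2; field.
  lra.
have [qD0|qDn] := lerP 0 qD.
  have : 0 <= e * h by rewrite mulr_ge0 // ltW.
  lra.
have : - (2 * qD) * (a / 2) <= - (2 * qD) * Tt by apply: ler_wpM2l => //; lra.
rewrite -HD in s4.
rewrite (_ : - (2 * (Tt * qD)) = - (2 * qD) * Tt) in s4; last by ring.
move=> h5.
have h6 : - (2 * qD) * (a / 2) <= e * h * (a / 2) by lra.
by rewrite ler_pM2r in h6 => //; rewrite divr_gt0.
Qed.



Lemma pure_choose {R : realType} (a P K D e : R) :
  0 < a -> 0 <= P -> 0 <= K -> 0 < D -> 0 < e ->
  exists g eta, [/\ 0 < g, 0 < eta, eta <= 1 &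
  a * g^+2 * P + a * D * eta^+2 + 2 * K * g^+2 * D * eta^+2 + 2 * K * g^+2 * a^+2 * P + D * eta^+2
     <= g * e * a^+2 / 2].
Proof.
move=> a0 P0 K0 D0 e0.
set Q := a * P + 2 * K * D + 2 * K * a^+2 * P + 1.
have Q0 : 0 < Q.
  have : 0 <= a * P + 2 * K * D + 2 * K * a^+2 * P.
    by rewrite !addr_ge0 // !mulr_ge0 // ?ltW // sqr_ge0.
  rewrite /Q; lra.
set g := Num.min 1 (e * a^+2 / (4 * Q)).
have c0 : 0 < e * a^+2 / (4 * Q) by rewrite !mulr_gt0 ?invr_gt0 ?exprn_gt0 // mulr_gt0.
have g0 : 0 < g by rewrite lt_min ltr01 c0.
have g1 : g <= 1 by rewrite ge_min lexx.
have gQ : g * Q <= e * a^+2 / 4.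
  have : g <= e * a^+2 / (4 * Q) by rewrite ge_min lexx orbT.
  rewrite -(ler_pM2r Q0) => H; apply: (le_trans H).
  rewrite (_ : e * a ^+ 2 / (4 * Q) * Q = e * a^+2 / 4) //; field; by rewrite gt_eqF.
set c := g * e * a^+2 / (4 * D * (a + 1)).
have c1 : 0 < c by rewrite !mulr_gt0 ?invr_gt0 ?exprn_gt0 // !mulr_gt0 //; lra.
set eta := Num.min 1 c.
have eta0 : 0 < eta by rewrite lt_min ltr01 c1.
have eta1 : eta <= 1 by rewrite ge_min lexx.
have etac : eta <= c by rewrite ge_min lexx orbT.
have eta2 : eta ^+ 2 <= eta by rewrite expr2 ler_piMl // ltW.
have eta2' : eta ^+ 2 <= 1 by lra.
exists g, eta; split => //.
have A1 : 2 * K * g^+2 * D * eta^+2 <= 2 * K * g^+2 * D.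
  rewrite -[leRHS]mulr1; apply: ler_wpM2l => //.
  by rewrite !mulr_ge0 ?sqr_ge0 // ltW.
have A2 : a * g^+2 * P + 2 * K * g^+2 * D + 2 * K * g^+2 * a^+2 * P <= g * e * a^+2 / 4.
  have -> : a * g^+2 * P + 2 * K * g^+2 * D + 2 * K * g^+2 * a^+2 * P = g * (g * Q) - g ^+ 2.
    by rewrite /Q; ring.
  have : g * (g * Q) <= g * (e * a^+2 / 4) by apply: ler_wpM2l => //; exact: ltW.
  have : 0 <= g ^+ 2 by rewrite sqr_ge0.
  have -> : g * (e * a ^+ 2 / 4) = g * e * a ^+ 2 / 4 by ring.
  lra.
have A3 : D * (a + 1) * eta^+2 <= g * e * a^+2 / 4.
  have Da : 0 < D * (a + 1) by rewrite mulr_gt0 //; lra.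
  have : D * (a + 1) * eta^+2 <= D * (a + 1) * c.
    by apply: ler_wpM2l; [exact: ltW | lra].
  have -> : D * (a + 1) * c = g * e * a^+2 / 4.
    rewrite /c; field; apply/andP; split; rewrite ?gt_eqF //; lra.
  done.
have E : a * D * eta^+2 + D * eta^+2 = D * (a + 1) * eta^+2 by ring.
lra.
Qed.



Lemma pureL2 {R : realType} (a P K D e : R) :
  0 < a -> 0 <= P -> 0 <= K -> 0 < D -> 0 < e ->
  exists g del, [/\ 0 < g, 0 < del &
  forall k Tt N1 N2 NA NX ND qD : R, `|k| < del ->
  0 <= N1 -> 0 <= NA -> 
  a / 2 <= Tt -> N1 <= D * k ^+ 2 -> N2 <= D * k ^+ 2 -> NA <= K * NX ->
  NX <= 2 * N2 + 2 * (k * a) ^+ 2 * P -> 0 <= ND ->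
  Tt ^+ 2 * ND <= 2 * N1 + 2 * NA ->
  2 * g * qD <= g ^+ 2 * P + ND -> - (2 * g * qD) <= g ^+ 2 * P + ND ->
  `|2 * qD + ND| <= e].
Proof.
move=> a0 P0 K0 D0 e0.
set g := e / (2 * (P + 1)).
have g0 : 0 < g by rewrite /g divr_gt0 //; lra.
have gP : g * P <= e / 2.
  have E : e / 2 - g * P = e / (2 * (P + 1)).
    rewrite /g; field; rewrite gt_eqF //; lra.
  have : 0 <= e / (2 * (P + 1)) by rewrite divr_ge0 ?ltW //; lra.
  lra.
set C0 := 2 * D + 4 * K * D + 4 * K * a ^+ 2 * P.
have C00 : 0 <= C0.
  by rewrite /C0 !addr_ge0 // !mulr_ge0 // ?sqr_ge0 // ltW.
set C := 4 * C0 / a ^+ 2 + 1.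
have C0' : 0 < C.
  have : 0 <= 4 * C0 / a ^+ 2 by rewrite !mulr_ge0 // invr_ge0 sqr_ge0.
  rewrite /C; lra.
set M := C * (1 + g^-1).
have M0 : 0 < M.
  have : 0 < g^-1 by rewrite invr_gt0.
  move=> ?; rewrite /M mulr_gt0 //; lra.
set del := Num.min 1 (e / (2 * M)).
have del0 : 0 < del by rewrite lt_min ltr01 divr_gt0 // mulr_gt0.
exists g, del; split => // k Tt N1 N2 NA NX ND qD kd N10 NA0 Ta N1b N2b NAb NXb ND0 NDb q1 q2.
have k1 : `|k| <= 1 by apply: ltW; apply: (lt_le_trans kd); rewrite ge_min lexx.
have k2 : k ^+ 2 <= e / (2 * M).
  rewrite -real_normK ?num_real // expr2.
  apply: (le_trans (ler_piMl (normr_ge0 k) k1)).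
  by apply: ltW; apply: (lt_le_trans kd); rewrite ge_min lexx orbT.
have NXb' : NA <= K * (2 * D * k ^+ 2 + 2 * k ^+ 2 * a ^+ 2 * P).
  apply: (le_trans NAb); apply: ler_wpM2l => //.
  rewrite exprMn in NXb; lra.
have T2 : a ^+ 2 / 4 <= Tt ^+ 2.
  have -> : a ^+ 2 / 4 = (a / 2) ^+ 2 by rewrite expr2; field.
  by rewrite ler_pXn2r ?nnegrE //; lra.
have NDC : ND <= C * k ^+ 2.
  have h1 : a ^+ 2 / 4 * ND <= C0 * k ^+ 2.
    apply: (le_trans (ler_wpM2r ND0 T2)); apply: (le_trans NDb).
    rewrite /C0. have E : (2 * D + 4 * K * D + 4 * K * a ^+ 2 * P) * k ^+ 2 = 2 * (D * k ^+ 2) + 2 * (K * (2 * D * k ^+ 2 + 2 * k ^+ 2 * a ^+ 2 * P)) by ring.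
    rewrite E; lra.
  have a2 : 0 < a ^+ 2 / 4 by rewrite divr_gt0 // exprn_gt0.
  rewrite -(ler_pM2l a2); apply: (le_trans h1).
  have -> : a ^+ 2 / 4 * (C * k ^+ 2) = C0 * k ^+ 2 + a ^+ 2 / 4 * k ^+ 2.
    by rewrite /C; field; rewrite gt_eqF.
  have : 0 <= a ^+ 2 / 4 * k ^+ 2 by rewrite mulr_ge0 ?sqr_ge0 // ltW.
  lra.
have NDM : ND * (1 + g^-1) <= e / 2.
  have : ND * (1 + g^-1) <= C * k ^+ 2 * (1 + g^-1).
    by apply: ler_wpM2r => //; rewrite addr_ge0 // invr_ge0 ltW.
  move=> H; apply: (le_trans H).
  have -> : C * k ^+ 2 * (1 + g^-1) = k ^+ 2 * M by rewrite /M; ring.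
  have : k ^+ 2 * M <= e / (2 * M) * M by apply: ler_wpM2r => //; exact: ltW.
  have -> : e / (2 * M) * M = e / 2 by field; rewrite gt_eqF.
  done.
have bq : `|2 * qD| <= g * P + ND / g.
  have E1 : 2 * qD = (2 * g * qD) / g by field; rewrite gt_eqF.
  have E2 : g * P + ND / g = (g ^+ 2 * P + ND) / g by field; rewrite gt_eqF.
  have gi : 0 < g^-1 by rewrite invr_gt0.
  rewrite E1 E2 normrM (gtr0_norm gi) ler_pM2r //.
  by rewrite ler_norml; apply/andP; split; lra.
apply: (le_trans (ler_normD _ _)).
rewrite (ger0_norm ND0).
have E : ND / g = ND * (1 + g^-1) - ND by ring.
lra.
Qed.



Section main.
Context (R : realType) (d : nat) (A : 'rV[R]_d -> 'rV[R]_d) (T : R) (X Z : R -> 'rV[R]_d) (K : R).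
Context (K0 : 0 <= K) (HK : forall x y, dotv (A x - A y) (A x - A y) <= K * dotv (x - y) (x - y)).
Context (Hmono : monotone_op A) (T0 : 0 < T).
Context (HX : forall t, 0 < t < T -> is_derive t 1 X (- Z t - A (X t))).
Context (HZ : forall t, 0 < t < T ->
     is_derive t 1 Z (- ((T - t)^-1 *: Z t) - (T - t)^-1 *: A (X t))).

Local Notation N u := (dotv u u).
Definition phi t := (T - t)^-1 *: (Z t + A (X t)).
Local Notation D := (d%:R + 1 : R).

Lemma D0 : 0 < D.
Proof. by rewrite ltr_pwDr. Qed.

Lemma phiE t : t < T -> (T - t) *: phi t = Z t + A (X t).
Proof. by move=> tT; rewrite /phi scalerA divff ?scale1r // subr_eq0 gt_eqF. Qed.

Lemma derX s : 0 < s < T -> is_derive s 1 X (- ((T - s) *: phi s)).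
Proof.
move=> hs; have sT : s < T by case/andP: hs.
by rewrite phiE // opprD; exact: HX.
Qed.

Lemma derZ s : 0 < s < T -> is_derive s 1 Z (- phi s).
Proof. by move=> hs; rewrite /phi scalerDr opprD; exact: HZ. Qed.

Lemma near_facts s : 0 < s < T -> forall eta, 0 < eta ->
  \forall t \near s,
    [/\ N (Z t - Z s + (t - s) *: phi s) <= D * (eta * `|t - s|) ^+ 2,
        N (X t - X s + (t - s) *: ((T - s) *: phi s)) <= D * (eta * `|t - s|) ^+ 2 &
        `|t - s| < (T - s) / 2].
Proof.
move=> hs eta eta0.
have sT : 0 < (T - s) / 2 by rewrite divr_gt0 // subr_gt0; case/andP: hs.
have h3 : \forall t \near s, `|t - s| < (T - s) / 2.
  apply/nbhs0P; apply: filterS (nbhs0_lt sT) => h.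
  by rewrite (addrC s h) addrK.
have hz := @deriv_eps R d Z s _ (derZ s hs) eta eta0.
have hx := @deriv_eps R d X s _ (derX s hs) eta eta0.
near=> t.
have bnd : forall u : 'rV[R]_d, `|u| <= eta * `|t - s| -> N u <= D * (eta * `|t - s|) ^+ 2.
  move=> u hu; apply: (le_trans (dotv_le_norm u)).
  have e0 : 0 <= eta * `|t - s| by rewrite mulr_ge0 // ltW.
  have : `|u| ^+ 2 <= (eta * `|t - s|) ^+ 2 by rewrite ler_pXn2r ?nnegrE.
  move=> H; apply: (le_trans (ler_wpM2l _ H)); first by rewrite ler0n.
  by rewrite ler_wpM2r ?sqr_ge0 // lerDl.
split.
- apply: bnd; rewrite (_ : Z t - Z s + (t - s) *: phi s = Z t - Z s - (t - s) *: (- phi s)).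
    by near: t; exact: hz.
  by rewrite scalerN opprK.
- apply: bnd; rewrite (_ : X t - X s + (t - s) *: ((T - s) *: phi s) = X t - X s - (t - s) *: (- ((T - s) *: phi s))).
    by near: t; exact: hx.
  by rewrite scalerN opprK.
- by near: t; exact: h3.
Unshelve. all: by end_near. Qed.


Lemma V1 s t : s < T -> t < T ->
  (T - t) *: (phi t - phi s) = (Z t - Z s + (t - s) *: phi s) + (A (X t) - A (X s)).
Proof.
move=> sT tT; apply/rowP => j; rewrite !mxE /phi.
idtac.
have : T - t != 0 by rewrite subr_eq0 gt_eqF.
have : T - s != 0 by rewrite subr_eq0 gt_eqF.
move=> h1 h2; field.
by rewrite h1 h2.
Qed.

Lemma V2 s t : X t - X s = (X t - X s + (t - s) *: ((T - s) *: phi s)) + ((s - t) * (T - s)) *: phi s.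
Proof. by apply/rowP => j; rewrite !mxE; ring. Qed.

Lemma Nsplit (u v : 'rV[R]_d) : N v = N u + 2 * dotv u (v - u) + N (v - u).
Proof.
have -> : N v = N (u + (v - u)) by rewrite addrC subrK.
by rewrite !(dotvDl, dotvDr) !(dotvNl, dotvNr) (dotvC v u) opprK; ring.
Qed.

Lemma L1 s : 0 < s < T -> forall e, 0 < e ->
  \forall t \near s, t < s -> N (phi s) <= N (phi t) + e * (s - t).
Proof.
move=> hs e e0.
have sT : s < T by case/andP: hs.
have a0 : 0 < T - s by rewrite subr_gt0.
have [g [eta [g0 eta0 eta1 Hc]]] := @pure_choose R (T - s) (N (phi s)) K D e a0 (dotv_ge0 (phi s)) K0 D0 e0.
apply: filterS (near_facts s hs eta eta0) => t [F1 F2 F3] ts.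
have h0 : 0 < s - t by rewrite subr_gt0.
have kh : `|t - s| = s - t by rewrite distrC gtr0_norm.
rewrite kh in F1 F2 F3.
have Ta : (T - s) / 2 <= T - t by lra.
have tT : t < T by lra.
set p := phi s in F1 F2 Hc *.
set e1v := Z t - Z s + (t - s) *: p in F1.
set e2v := X t - X s + (t - s) *: ((T - s) *: p) in F2.
set dA := A (X t) - A (X s).
set Dl := phi t - p.
have HV1 : (T - t) *: Dl = e1v + dA by rewrite /Dl /p V1.
have HV2 : X t - X s = e2v + ((s - t) * (T - s)) *: p by rewrite /e2v /p -V2.
have H2 : - (2 * (g * (s - t)) * dotv p e1v) <= (g * (s - t)) ^+ 2 * N p + N e1v.
  have := @amgm' R d p (- e1v) (g * (s - t)) (mulr_gt0 g0 h0).
  by rewrite dotvNr dotvNl dotvNr opprK mulrN.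
have H4 := @amgm' R d dA e2v g g0.
have H6 := HK (X t) (X s).
have H7 : N (X t - X s) <= 2 * N e2v + 2 * ((s - t) * (T - s)) ^+ 2 * N p.
  by rewrite HV2; apply: (le_trans (dotv_add_le _ _)); rewrite dotvZZ mulrA.
have H8 : 0 <= dotv dA e2v + (s - t) * (T - s) * dotv dA p.
  by have := Hmono (X t) (X s); rewrite -/dA HV2 dotvDr dotvZr.
have H9 : (T - t) * dotv p Dl = dotv p e1v + dotv dA p.
  by rewrite -dotvZr HV1 dotvDr (dotvC p dA).
have := @pureL1 R _ _ _ _ _ _ _ _ _ _ _ _ _ _ _ _ _ e0 a0 h0 g0 (dotv_ge0 p) K0 Ta H2 F1 H4 F2 H6 H7 H8 H9 Hc.
have := Nsplit p (phi t); rewrite -/Dl.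
have := dotv_ge0 Dl.
lra.
Qed.


Lemma L2 s : 0 < s < T -> forall e, 0 < e ->
  \forall t \near s, `|N (phi t) - N (phi s)| <= e.
Proof.
move=> hs e e0.
have sT : s < T by case/andP: hs.
have a0 : 0 < T - s by rewrite subr_gt0.
have [g [del [g0 del0 Hp]]] := @pureL2 R (T - s) (N (phi s)) K D e a0 (dotv_ge0 (phi s)) K0 D0 e0.
have hd : \forall t \near s, `|t - s| < del.
  apply/nbhs0P; apply: filterS (nbhs0_lt del0) => h.
  by rewrite (addrC s h) addrK.
near=> t.
have [F1 F2 F3] : [/\ N (Z t - Z s + (t - s) *: phi s) <= D * (1 * `|t - s|) ^+ 2,
        N (X t - X s + (t - s) *: ((T - s) *: phi s)) <= D * (1 * `|t - s|) ^+ 2 &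
        `|t - s| < (T - s) / 2] by near: t; exact: (near_facts s hs 1 ltr01).
have kd : `|t - s| < del by near: t; exact: hd.
rewrite mul1r in F1 F2.
have Ta : (T - s) / 2 <= T - t by have := ler_norm (t - s); lra.
have tT : t < T by lra.
set p := phi s in F1 F2 *.
set e1v := Z t - Z s + (t - s) *: p in F1.
set e2v := X t - X s + (t - s) *: ((T - s) *: p) in F2.
set dA := A (X t) - A (X s).
set Dl := phi t - p.
have HV1 : (T - t) *: Dl = e1v + dA by rewrite /Dl /p V1.
have HV2 : X t - X s = e2v + ((s - t) * (T - s)) *: p by rewrite /e2v /p -V2.
have H7 : N (X t - X s) <= 2 * N e2v + 2 * (`|t - s| * (T - s)) ^+ 2 * N p.
  rewrite HV2; apply: (le_trans (dotv_add_le _ _)); rewrite dotvZZ mulrA.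
  by rewrite !exprMn distrC real_normK ?num_real.
have H10 : (T - t) ^+ 2 * N Dl <= 2 * N e1v + 2 * N dA.
  by rewrite -dotvZZ HV1; apply: dotv_add_le.
have H11 := @amgm' R d p Dl g g0.
have H12 : - (2 * g * dotv p Dl) <= g ^+ 2 * N p + N Dl.
  have := @amgm' R d p (- Dl) g g0.
  by rewrite dotvNr dotvNl dotvNr opprK mulrN.
have := Hp _ _ _ _ _ _ _ _ _ (dotv_ge0 e1v) (dotv_ge0 dA) Ta F1 F2 (HK (X t) (X s)) H7 (dotv_ge0 Dl) H10 H11 H12.
rewrite normr_id => /(_ kd).
have := Nsplit p (phi t); rewrite -/Dl => ->.
by rewrite (_ : N p + 2 * dotv p Dl + N Dl - N p = 2 * dotv p Dl + N Dl); last by ring.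
Unshelve. all: by end_near. Qed.


Lemma Gcont eps t0 b : 0 < eps -> 0 < t0 -> b < T ->
  {within `[t0, b], continuous (fun t => N (phi t) - 2 * eps * t)}.
Proof.
move=> eps0 t00 bT.
apply: continuous_in_subspaceT => x; rewrite inE /= in_itv /= => /andP[x1 x2].
have hx : 0 < x < T by apply/andP; split; lra.
apply/cvgrPdist_le => r r0.
have r2 : 0 < r / 2 by rewrite divr_gt0.
have r4 : 0 < r / (4 * eps) by rewrite divr_gt0 // mulr_gt0.
have hd : \forall t \near x, `|t - x| < r / (4 * eps).
  apply/nbhs0P; apply: filterS (nbhs0_lt r4) => h.
  by rewrite (addrC x h) addrK.
near=> t.
have H1 : `|N (phi t) - N (phi x)| <= r / 2 by near: t; exact: (L2 x hx (r / 2) r2).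
have H2 : `|t - x| < r / (4 * eps) by near: t; exact: hd.
have H3 : 2 * eps * `|t - x| <= r / 2.
  have : 2 * eps * `|t - x| <= 2 * eps * (r / (4 * eps)).
    by rewrite ler_wpM2l ?ltW // mulr_gt0.
  have -> : 2 * eps * (r / (4 * eps)) = r / 2 by field; rewrite gt_eqF.
  done.
have E : N (phi x) - 2 * eps * x - (N (phi t) - 2 * eps * t) = - (N (phi t) - N (phi x)) + 2 * eps * (t - x) by ring.
rewrite E; apply: (le_trans (ler_normD _ _)).
rewrite normrN normrM (ger0_norm (_ : 0 <= 2 * eps)); last by rewrite mulr_ge0 // ltW.
lra.
Unshelve. all: by end_near. Qed.

Lemma bound t0 b : 0 < t0 -> t0 <= b -> b < T -> N (phi b) <= N (phi t0).
Proof.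
move=> t00 t0b bT.
apply/ler_addgt0Pr => e e0.
set c := 2 * (b - t0) + 1.
have c0 : 0 < c by rewrite /c; lra.
set eps := e / c.
have eps0 : 0 < eps by rewrite divr_gt0.
suff H : N (phi b) <= N (phi t0) + 2 * eps * (b - t0).
  have : 2 * eps * (b - t0) <= e.
    have -> : 2 * eps * (b - t0) = e * (2 * (b - t0) / c) by rewrite /eps; field; rewrite gt_eqF.
    rewrite -[leRHS]mulr1 ler_wpM2l ?ltW //.
    have E : 2 * (b - t0) / c = 1 - c^-1 by rewrite /c; field; rewrite gt_eqF.
    rewrite E.
    have : 0 < c^-1 by rewrite invr_gt0.
    lra.
  lra.
set G := fun t => N (phi t) - 2 * eps * t.
have [cc ccin Hmax] := EVT_max t0b (Gcont eps t0 b eps0 t00 bT).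
move: (ccin); rewrite in_itv /= => /andP[c1 c2].
have bin : b \in `[t0, b] by rewrite in_itv /= t0b lexx.
have t0in : t0 \in `[t0, b] by rewrite in_itv /= t0b lexx.
have [ceq|clt] := eqVneq cc t0.
  have := Hmax b bin; rewrite ceq /=; lra.
have ct : t0 < cc by rewrite lt_neqAle eq_sym clt c1.
have hc : 0 < cc < T by apply/andP; split; lra.
exfalso.
near cc^'- => t.
have tc : t < cc by near: t; exact: nbhs_left_lt.
have t0t : t0 < t by near: t; exact: nbhs_left_gt.
have Lt : N (phi cc) <= N (phi t) + eps * (cc - t) by near: t; exact: (L1 cc hc eps eps0).
have tin : t \in `[t0, b] by rewrite in_itv /=; apply/andP; split; lra.
have := Hmax t tin; rewrite /=.
have : 0 < eps * (cc - t) by rewrite mulr_gt0 // subr_gt0.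
lra.
Unshelve. all: by end_near. Qed.


Local Notation t0 := (T / 2).
Local Notation m := (Num.sqrt (N (phi (T / 2)))).

Lemma m0 : 0 <= m.
Proof. exact: sqrtr_ge0. Qed.

Lemma t00 : 0 < t0.
Proof. by rewrite divr_gt0. Qed.

Lemma dXE t : 0 < t < T -> derive1 X t = - ((T - t) *: phi t).
Proof. by move=> ht; rewrite derive1E; have [_ ->] := derX t ht. Qed.

Lemma dXb t : t0 <= t < T -> `|- ((T - t) *: phi t)| <= (T - t) * m.
Proof.
case/andP => h1 h2.
have Tt : 0 <= T - t by rewrite subr_ge0 ltW.
apply: normv_le; first by rewrite mulr_ge0 // m0.
rewrite dotvNl dotvNr opprK dotvZZ exprMn sqr_sqrtr ?dotv_ge0 //.
by rewrite ler_wpM2l ?sqr_ge0 // bound // t00.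
Qed.

Lemma Xdiff t u : t0 <= t -> t <= u -> u < T -> `|X u - X t| <= m * (T - t) ^+ 2.
Proof.
move=> h1 h2 h3.
have tT : 0 <= T - t by lra.
apply: mxnorm_le; first by rewrite mulr_ge0 // ?m0 // sqr_ge0.
move=> j.
set f := fun r => X r 0 j.
set df := fun r => (- ((T - r) *: phi r)) 0 j.
have hder : forall r, 0 < r < T -> is_derive r 1 f (df r).
  move=> r hr; have [dX dv] := derX r hr.
  apply: DeriveDef; first exact: ((derivable_mxP X r 1).1 dX 0 j).
  by rewrite /df -dv derive_mx // mxE.
have hr : forall r, t <= r <= u -> 0 < r < T.
  move=> r /andP[r1 r2]; have t0p := t00; apply/andP; split; lra.
have [c cin Hc] : exists2 c, c \in `[t, u] & f u - f t = df c * (u - t).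
  apply: MVT_segment => //.
    by move=> x; rewrite in_itv /= => /andP[x1 x2]; apply: hder; apply: hr; apply/andP; split; lra.
  apply: continuous_in_subspaceT => x; rewrite inE /= in_itv /= => xin.
  have [dx _] := hder x (hr x xin).
  exact/differentiable_continuous/derivable1_diffP.
move: cin; rewrite in_itv /= => /andP[c1 c2].
rewrite !mxE -/(f u) -/(f t) Hc normrM.
have Hdc : `|df c| <= (T - t) * m.
  apply: (le_trans (coord_le_norm _ j)).
  apply: (le_trans (dXb c _)); first by apply/andP; split; lra.
  by rewrite ler_wpM2r ?m0 //; lra.
rewrite (ger0_norm (_ : 0 <= u - t)); last by lra.
have : `|df c| * (u - t) <= (T - t) * m * (u - t) by rewrite ler_wpM2r //; lra.
have : (T - t) * m * (u - t) <= (T - t) * m * (T - t).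
  by rewrite ler_wpM2l ?mulr_ge0 ?m0 //; lra.
have -> : m * (T - t) ^+ 2 = (T - t) * m * (T - t) by ring.
lra.
Qed.


Lemma Xcvg : cvg (X t @[t --> T^'-]).
Proof.
apply: cauchy_cvg; apply: cauchy_exP => eps eps0.
have m1 : 0 < m + 1 by have := m0; lra.
set w := Num.min (T / 2) (Num.min 1 (eps / (m + 1))).
have w0 : 0 < w by rewrite !lt_min divr_gt0 //= ltr01 divr_gt0.
have wT : w <= T / 2 by rewrite ge_min lexx.
have w1 : w <= 1 by rewrite !ge_min lexx orbT.
have we : w <= eps / (m + 1) by rewrite !ge_min lexx !orbT.
exists (X (T - w)).
change (\forall t \near T^'-, ball (X (T - w)) eps (X t)).
near=> t.
have t1t : T - w < t by near: t; apply: nbhs_left_gt; lra.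
have tT : t < T by near: t; exact: nbhs_left_lt.
rewrite -ball_normE /ball_ /= distrC.
apply: (le_lt_trans (Xdiff (T - w) t _ _ tT)); try lra.
rewrite opprB addrC subrK.
have : m * w ^+ 2 <= m * w by rewrite ler_wpM2l ?m0 // expr2 ler_piMl // ltW.
have : m * w <= m * (eps / (m + 1)) by rewrite ler_wpM2l ?m0.
have E : m * (eps / (m + 1)) = eps - eps / (m + 1) by field; rewrite gt_eqF.
have : 0 < eps / (m + 1) by rewrite divr_gt0.
lra.
Unshelve. all: by end_near. Qed.


Lemma final : exists XT : 'rV[R]_d,
    X t @[t --> T^'-] --> XT /\
    (derive1 X) t @[t --> T^'-] --> (0 : 'rV[R]_d) /\
    ((t - T)^-1 *: (X t - XT)) @[t --> T^'-] --> (0 : 'rV[R]_d).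
Proof.
have HXT := Xcvg.
set XT := lim (X t @[t --> T^'-]).
have t0T : t0 < T by have := T0; lra.
have m1 : 0 < m + 1 by have := m0; lra.
have XTb : forall t, t0 <= t -> t < T -> `|X t - XT| <= m * (T - t) ^+ 2.
  move=> t h1 h2.
  have H : `|X t - X u| @[u --> T^'-] --> `|X t - XT|.
    by apply: cvg_norm; apply: cvgB; [exact: cvg_cst | exact: HXT].
  rewrite -(cvg_lim _ H) //; apply: limr_le; first by apply/cvg_ex; eexists; exact: H.
  near=> u.
  have tu : t < u by near: u; exact: nbhs_left_gt.
  have uT : u < T by near: u; exact: nbhs_left_lt.
  rewrite distrC; apply: Xdiff => //; lra.
exists XT; split; first exact: HXT.
split.
- apply/cvgr0Pnorm_le => e e0.
  have em : 0 < e / (m + 1) by rewrite divr_gt0.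
  near=> t.
  have t0t : t0 < t by near: t; exact: nbhs_left_gt.
  have tT : t < T by near: t; exact: nbhs_left_lt.
  have Te : T - t < e / (m + 1) by near: t; exact: nbhs_left_ltBl.
  have ht : 0 < t < T by have t0p := t00; apply/andP; split; lra.
  rewrite dXE //; apply: (le_trans (dXb t _)); first by apply/andP; split; lra.
  have : (T - t) * m <= e / (m + 1) * m by rewrite ler_wpM2r ?m0 //; lra.
  have E : e / (m + 1) * m = e - e / (m + 1) by field; rewrite gt_eqF.
  lra.
- apply/cvgr0Pnorm_le => e e0.
  have em : 0 < e / (m + 1) by rewrite divr_gt0.
  near=> t.
  have t0t : t0 < t by near: t; exact: nbhs_left_gt.
  have tT : t < T by near: t; exact: nbhs_left_lt.
  have Te : T - t < e / (m + 1) by near: t; exact: nbhs_left_ltBl.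
  have Tt0 : 0 < T - t by lra.
  rewrite normrZ normrV ?unitfE ?subr_eq0 ?lt_eqF // distrC gtr0_norm //.
  have := XTb t (ltW t0t) tT => H.
  have : (T - t)^-1 * `|X t - XT| <= (T - t)^-1 * (m * (T - t) ^+ 2).
    by rewrite ler_wpM2l // invr_ge0 ltW.
  have -> : (T - t)^-1 * (m * (T - t) ^+ 2) = (T - t) * m by field; rewrite gt_eqF.
  have : (T - t) * m <= e / (m + 1) * m by rewrite ler_wpM2r ?m0 //; lra.
  have E : e / (m + 1) * m = e - e / (m + 1) by field; rewrite gt_eqF.
  lra.
Unshelve. all: by end_near. Qed.

End main.



Lemma lipK {R : realType} {d : nat} (A : 'rV[R]_d -> 'rV[R]_d) : lipschitzE A ->
  exists K, 0 <= K /\ forall x y, dotv (A x - A y) (A x - A y) <= K * dotv (x - y) (x - y).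
Proof.
case=> L HL; exists (L ^+ 2); split; first exact: sqr_ge0.
move=> x y; have H := HL x y.
have e0 : 0 <= enorm (A x - A y) by exact: sqrtr_ge0.
have Ha : enorm (A x - A y) ^+ 2 <= (L * enorm (x - y)) ^+ 2.
  by rewrite ler_pXn2r ?nnegrE // (le_trans e0 H).
by rewrite /enorm exprMn !sqr_sqrtr ?dotv_ge0 in Ha.
Qed.

Theorem corollaryH4 (R : realType) (d : nat) (A : 'rV[R]_d -> 'rV[R]_d)
  (T : R) (X0 : 'rV[R]_d) (X Z : R -> 'rV[R]_d) :
  lipschitzE A -> monotone_op A -> 0 < T ->
  {within `[0, T[, continuous X} -> {within `[0, T[, continuous Z} ->
  X 0 = X0 -> Z 0 = 0 ->
  (forall t, 0 < t < T -> is_derive t 1 X (- Z t - A (X t))) ->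
  (forall t, 0 < t < T ->
     is_derive t 1 Z (- ((T - t)^-1 *: Z t) - (T - t)^-1 *: A (X t))) ->
  exists XT : 'rV[R]_d,
    X t @[t --> T^'-] --> XT /\
    (derive1 X) t @[t --> T^'-] --> (0 : 'rV[R]_d) /\
    ((t - T)^-1 *: (X t - XT)) @[t --> T^'-] --> (0 : 'rV[R]_d).
Proof.
move=> hL hM T0 _ _ _ _ HX HZ.
have [K [K0 HK]] := lipK A hL.

exact: (@final R d A T X Z K K0 HK hM T0 HX HZ).
Qed.
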